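(* For all integers $m,k\ge 0$, $$\zeta(\bar 1,\{1\}_m,\bar 1,\{1\}_k)=\frac{(-1)^{m+k+1}}{k!}\sum_{j=0}^{k}(-1)^j(\ln 2)^{k-j}j!\binom{k}{j}\left\{\zeta(m+2,\{1\}_j)-\sum_{l=0}^{m+1}\frac{(\ln 2)^{m+1-l}}{(m+1-l)!}\mathrm{Li}_{l+1,\{1\}_j}\!\left(\tfrac12\right)\right\}.$$
   Context: For nonzero integers $s_1,\dots,s_k$, with $\operatorname{sgn}(s)=1$ if $s>0$ and $-1$ if $s<0$, the multiple zeta value is $\zeta(s_1,\dots,s_k)=\sum_{n_1>n_2>\cdots>n_k\ge 1}\prod_{j=1}^k n_j^{-|s_j|}\operatorname{sgn}(s_j)^{n_j}$. A barred entry $\bar p$ denotes the negative entry $-p$. The notation $\{1\}_d$ means the entry $1$ repeated $d$ times ($d=0$ means no entries). For positive integers $s_1,\dots,s_r$ and $0\le x<1$, the multiple polylogarithm is $\mathrm{Li}_{s_1,\dots,s_r}(x)=\sum_{n_1>\cdots>n_r>0}\frac{x^{n_1}}{n_1^{s_1}\cdots n_r^{s_r}}$. *)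

(* Defs.v *)
From Stdlib Require Import Reals ZArith List.
From Coquelicot Require Import Coquelicot.
Open Scope R_scope.

Definition sgn_pow (a : Z) (n : nat) : R :=
  if (a <? 0)%Z then (-1) ^ n else 1.

(* Truncated (alternating) multiple zeta sum:
   mzv_trunc s N = sum_{N >= n_1 > n_2 > ... > n_k >= 1}
                     prod_j sgn(s_j)^{n_j} / n_j^{|s_j|}   (empty product = 1). *)
Fixpoint mzv_trunc (s : list Z) (N : nat) : R :=
  match s with
  | nil => 1
  | a :: r =>
      (fix go (M : nat) : R :=
         match M with
         | O => 0
         | S n => go n + sgn_pow a (S n) / (INR (S n)) ^ (Z.abs_nat a) * mzv_trunc r n
         end) N
  end.

(* Multiple zeta value: limit of the partial sums over n_1 <= N
   (the standard meaning of the nested series, including the conditionally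
   convergent alternating case). *)
Definition mzv (s : list Z) : R := real (Lim_seq (mzv_trunc s)).

(* Truncated multiple polylogarithm:
   sum_{N >= n_1 > ... > n_r > 0} x^{n_1} / (n_1^{s_1} ... n_r^{s_r}). *)
Definition Li_trunc (s : list nat) (x : R) (N : nat) : R :=
  match s with
  | nil => 1
  | a :: r =>
      (fix go (M : nat) : R :=
         match M with
         | O => 0
         | S n => go n + x ^ (S n) / (INR (S n)) ^ a * mzv_trunc (map Z.of_nat r) n
         end) N
  end.

Definition Li (s : list nat) (x : R) : R := real (Lim_seq (Li_trunc s x)).

Definition ones (d : nat) : list Z := repeat 1%Z d.
Definition onesN (d : nat) : list nat := repeat 1%nat d.

(* Main.v *)
Require Import Defs.
From Stdlib Require Import Reals ZArith List.
From Coquelicot Require Import Coquelicot.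
From Stdlib Require Import Lra Lia.
Open Scope R_scope.


Definition coef (s : list Z) (j : nat) : R :=
  match s with
  | nil => match j with O => 1 | S _ => 0 end
  | a :: r => match j with
              | O => 0
              | S n => sgn_pow a (S n) / (INR (S n)) ^ (Z.abs_nat a) * mzv_trunc r n
              end
  end.

Lemma mzv_trunc_cons_S a r n :
  mzv_trunc (a :: r) (S n) = mzv_trunc (a :: r) n + sgn_pow a (S n) / (INR (S n)) ^ (Z.abs_nat a) * mzv_trunc r n.
Proof. reflexivity. Qed.

Lemma mzv_trunc_cons_0 a r : mzv_trunc (a :: r) 0 = 0.
Proof. reflexivity. Qed.

Lemma sum_coef s N : sum_f_R0 (coef s) N = mzv_trunc s N.
Proof.
  destruct s as [|a r].
  - induction N; simpl in *; [reflexivity|]. rewrite IHN. ring.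
  - induction N.
    + simpl. reflexivity.
    + rewrite mzv_trunc_cons_S, <- IHN. simpl sum_f_R0. reflexivity.
Qed.

Fixpoint hN (n : nat) : R := match n with O => 0 | S n => hN n + / INR (S n) end.

Lemma INR_S_pos n : 0 < INR (S n).
Proof. apply lt_0_INR; lia. Qed.
Lemma Rinv_S_pos n : 0 < / INR (S n).
Proof. apply Rinv_0_lt_compat, INR_S_pos. Qed.

Lemma hN_S n : hN (S n) = hN n + / INR (S n).
Proof. reflexivity. Qed.
Lemma hN_0 : hN 0 = 0.
Proof. reflexivity. Qed.

Lemma hN_ge0 n : 0 <= hN n.
Proof.
  induction n; [rewrite hN_0; lra|]. rewrite hN_S. pose proof (Rinv_S_pos n). lra.
Qed.

Lemma hN_mono n m : (n <= m)%nat -> hN n <= hN m.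
Proof.
  induction 1; [lra|]. rewrite hN_S. pose proof (Rinv_S_pos m). lra.
Qed.

Lemma hN_ge1 n : (1 <= n)%nat -> 1 <= hN n.
Proof.
  intros H. apply Rle_trans with (hN 1). rewrite hN_S, hN_0. change (INR 1) with 1. rewrite Rinv_1. lra. now apply hN_mono.
Qed.

Lemma pow_diff_le (a b : R) (K : nat) : 0 <= a <= b ->
  b ^ S K - a ^ S K <= INR (S K) * b ^ K * (b - a).
Proof.
  intros [Ha Hab]. induction K.
  - simpl. lra.
  -
    assert (E : b ^ S (S K) - a ^ S (S K) = b * (b ^ S K - a ^ S K) + a ^ S K * (b - a)) by (simpl; ring).
    rewrite E.
    assert (H1 : b * (b ^ S K - a ^ S K) <= b * (INR (S K) * b ^ K * (b - a))).
    { apply Rmult_le_compat_l; lra. }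
    assert (H2 : a ^ S K * (b - a) <= b ^ S K * (b - a)).
    { apply Rmult_le_compat_r; [lra|]. apply pow_incr; lra. }
    rewrite (S_INR (S K)).
    replace ((INR (S K) + 1) * b ^ S K * (b - a)) with (b * (INR (S K) * b ^ K * (b - a)) + b ^ S K * (b - a)) by (simpl; ring).
    lra.
Qed.


Fixpoint PK (K N : nat) : R :=
  match N with O => 0 | S N' => PK K N' + hN (S N') ^ K / (INR (S N') * INR (S (S N'))) end.
Fixpoint RK (K N : nat) : R :=
  match N with O => 0 | S N' => RK K N' + (hN (S N') ^ K - hN N' ^ K) / INR (S N') end.

Lemma PK_S K N : PK K (S N) = PK K N + hN (S N) ^ K / (INR (S N) * INR (S (S N))).
Proof. reflexivity. Qed.
Lemma RK_S K N : RK K (S N) = RK K N + (hN (S N) ^ K - hN N ^ K) / INR (S N).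
Proof. reflexivity. Qed.
Lemma PK_0 K : PK K 0 = 0. Proof. reflexivity. Qed.
Lemma RK_0 K : RK K 0 = 0. Proof. reflexivity. Qed.

Lemma PK_ge0 K N : 0 <= PK K N.
Proof.
  induction N; [rewrite PK_0; lra|]. rewrite PK_S.
  assert (0 <= hN (S N) ^ K / (INR (S N) * INR (S (S N)))).
  { apply Rmult_le_pos. apply pow_le, hN_ge0. left; apply Rinv_0_lt_compat, Rmult_lt_0_compat; apply INR_S_pos. }
  lra.
Qed.

Lemma QK_eq K N : PK K N + hN N ^ K / INR (S N) = RK K N + hN 0 ^ K.
Proof.
  induction N.
  - rewrite PK_0, RK_0. change (INR 1) with 1. rewrite hN_0. field.
  - rewrite PK_S, RK_S.
    pose proof (INR_S_pos N). pose proof (INR_S_pos (S N)).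
    assert (E: INR (S (S N)) = INR (S N) + 1) by apply S_INR.
    assert (HR: RK K N = PK K N + hN N ^ K / INR (S N) - hN 0 ^ K) by lra. rewrite HR, hN_S, E. field. lra.
Qed.

Lemma QK_bound K : exists B, forall N, PK K N + hN N ^ K / INR (S N) <= B.
Proof.
  induction K.
  - exists 1. intros N. rewrite QK_eq. simpl pow.
    assert (RK 0 N = 0). { induction N; [apply RK_0|]. rewrite RK_S, IHN. simpl pow. lra. }
    lra.
  - destruct IHK as [B HB]. exists (2 * INR (S K) * B). intros N.
    rewrite QK_eq. rewrite hN_0. rewrite pow_i by lia. rewrite Rplus_0_r.
    assert (H : RK (S K) N <= 2 * INR (S K) * PK K N).
    { induction N.
      - rewrite RK_0, PK_0. pose proof (INR_S_pos K). lra.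
      - rewrite RK_S, PK_S. pose proof (pow_diff_le (hN N) (hN (S N)) K) as Hd.
        pose proof (hN_ge0 N). pose proof (Rinv_S_pos N).
        specialize (Hd (conj (hN_ge0 N) (hN_mono N (S N) ltac:(lia)))).
        replace (hN (S N) - hN N) with (/ INR (S N)) in Hd by (rewrite hN_S; ring).
        assert (T : (hN (S N) ^ S K - hN N ^ S K) / INR (S N) <= 2 * INR (S K) * (hN (S N) ^ K / (INR (S N) * INR (S (S N))))).
        { pose proof (INR_S_pos N) as P1. pose proof (INR_S_pos K) as P2.
          assert (E: INR (S (S N)) = INR (S N) + 1) by apply S_INR.
          rewrite E.
          apply Rle_trans with (INR (S K) * hN (S N) ^ K * / INR (S N) / INR (S N)).
          { unfold Rdiv. apply Rmult_le_compat_r; [left; apply Rinv_0_lt_compat; lra|]. exact Hd. }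
          assert (0 <= hN (S N) ^ K) by (apply pow_le, hN_ge0).
          assert (1 <= INR (S N)). { rewrite S_INR. pose proof (pos_INR N). lra. }
          unfold Rdiv. rewrite Rinv_mult.
          assert (/ INR (S N) * / INR (S N) <= 2 * (/ INR (S N) * / (INR (S N) + 1))).
          { apply Rmult_le_reg_l with (INR (S N) * INR (S N) * (INR (S N) + 1)). 
            apply Rmult_lt_0_compat; [apply Rmult_lt_0_compat|]; lra.
            field_simplify; try lra. }
          replace (INR (S K) * hN (S N) ^ K * / INR (S N) * / INR (S N)) with ((INR (S K) * hN (S N) ^ K) * (/ INR (S N) * / INR (S N))) by ring.
          replace (2 * INR (S K) * (hN (S N) ^ K * (/ INR (S N) * / (INR (S N) + 1)))) with ((INR (S K) * hN (S N) ^ K) * (2 * (/ INR (S N) * / (INR (S N) + 1)))) by ring.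
          apply Rmult_le_compat_l; [|assumption]. apply Rmult_le_pos; lra. }
        lra. }
    specialize (HB N). pose proof (PK_ge0 K N).
    assert (0 <= hN N ^ K / INR (S N)).
    { apply Rmult_le_pos. apply pow_le, hN_ge0. left; apply Rinv_S_pos. }
    pose proof (INR_S_pos K). nra.
Qed.

Lemma hpow_bound K : exists B, 0 <= B /\ forall N, hN N ^ K <= B * INR (S N).
Proof.
  destruct (QK_bound K) as [B HB]. exists (Rmax B 0). split; [apply Rmax_r|]. intros N.
  specialize (HB N). pose proof (PK_ge0 K N). pose proof (INR_S_pos N).
  assert (hN N ^ K / INR (S N) <= Rmax B 0) by (pose proof (Rmax_l B 0); lra).
  apply Rmult_le_reg_r with (/ INR (S N)). apply Rinv_0_lt_compat; lra.
  rewrite Rmult_assoc, Rinv_r by lra. rewrite Rmult_1_r. exact H1.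
Qed.

Lemma PK_bound K : exists B, forall N, PK K N <= B.
Proof.
  destruct (QK_bound K) as [B HB]. exists B. intros N.
  specialize (HB N).
  assert (0 <= hN N ^ K / INR (S N)).
  { apply Rmult_le_pos. apply pow_le, hN_ge0. left; apply Rinv_S_pos. }
  lra.
Qed.

Lemma hpow_lim K : is_lim_seq (fun N => hN N ^ K / INR (S N)) 0.
Proof.
  destruct (hpow_bound (2 * K)) as [B [HB0 HB]].
  apply is_lim_seq_spec. intros eps.
  destruct (archimed (B / (eps * eps))) as [Har _].
  assert (Hz: (0 <= up (B / (eps * eps)))%Z).
  { apply le_IZR. assert (0 <= B / (eps*eps)). { apply Rmult_le_pos; [lra|]. left; apply Rinv_0_lt_compat. pose proof (cond_pos eps). nra. } simpl. lra. }
  exists (Z.to_nat (up (B / (eps * eps)))). intros n Hn.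
  rewrite Rminus_0_r.
  set (x := hN n ^ K / INR (S n)).
  assert (Hx0 : 0 <= x). { apply Rmult_le_pos. apply pow_le, hN_ge0. left; apply Rinv_S_pos. }
  rewrite Rabs_pos_eq by exact Hx0.
  pose proof (INR_S_pos n) as Hn1.
  assert (Hx2 : x * x <= B / INR (S n)).
  { unfold x. specialize (HB n). rewrite Nat.mul_comm, pow_mult in HB.
    replace (hN n ^ K / INR (S n) * (hN n ^ K / INR (S n))) with ((hN n ^ K) ^ 2 / INR (S n) / INR (S n)).
    2:{ replace ((hN n ^ K) ^ 2) with (hN n ^ K * hN n ^ K) by ring. field. lra. }
    unfold Rdiv. apply Rmult_le_compat_r. left; apply Rinv_0_lt_compat; lra.
    apply Rmult_le_reg_r with (INR (S n)); [lra|]. rewrite Rmult_assoc, Rinv_l by lra. rewrite Rmult_1_r.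
    exact HB. }
  assert (Hup : B / (eps * eps) < INR (S n)).
  { apply Rlt_le_trans with (IZR (up (B / (eps * eps)))); [exact Har|].
    rewrite <- (Z2Nat.id _ Hz). rewrite <- INR_IZR_INZ. apply le_INR. lia. }
  pose proof (cond_pos eps) as He.
  assert (B / INR (S n) < eps * eps).
  { apply Rmult_lt_reg_r with (INR (S n)); [lra|]. unfold Rdiv. rewrite Rmult_assoc, Rinv_l by lra.
    rewrite Rmult_1_r. apply Rmult_lt_reg_r with (/ (eps * eps)). apply Rinv_0_lt_compat; nra.
    replace (eps * eps * INR (S n) * / (eps * eps)) with (INR (S n)) by (field; lra). exact Hup. }
  nra.
Qed.


Definition nz (s : list Z) := List.Forall (fun a => a <> 0%Z) s.

Lemma sgn_pow_abs a n : Rabs (sgn_pow a n) = 1.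
Proof.
  unfold sgn_pow. destruct (a <? 0)%Z.
  - rewrite <- RPow_abs. replace (Rabs (-1)) with 1 by (rewrite Rabs_left; lra). apply pow1.
  - apply Rabs_R1.
Qed.

Lemma inv_pow_le n e : (1 <= e)%nat -> / INR (S n) ^ e <= / INR (S n).
Proof.
  intros He. pose proof (INR_S_pos n).
  assert (1 <= INR (S n)) by (rewrite S_INR; pose proof (pos_INR n); lra).
  apply Rinv_le_contravar; [lra|].
  destruct e; [lia|]. change (INR (S n) ^ S e) with (INR (S n) * INR (S n) ^ e). rewrite <- (Rmult_1_r (INR (S n))) at 1.
  apply Rmult_le_compat_l; [lra|]. apply pow_R1_Rle. lra.
Qed.

Lemma term_abs_le a n : a <> 0%Z -> Rabs (sgn_pow a (S n) / INR (S n) ^ Z.abs_nat a) <= / INR (S n).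
Proof.
  intros Ha. unfold Rdiv. rewrite Rabs_mult, sgn_pow_abs, Rmult_1_l.
  rewrite Rabs_pos_eq. apply inv_pow_le. lia.
  left. apply Rinv_0_lt_compat, pow_lt, INR_S_pos.
Qed.

Lemma mzv_bound s : nz s -> forall N, Rabs (mzv_trunc s N) <= hN N ^ length s.
Proof.
  induction s as [|a r IH]; intros Hs N.
  - simpl. rewrite Rabs_R1. lra.
  - inversion Hs as [|? ? Ha Hr]; subst. specialize (IH Hr).
    induction N.
    + rewrite mzv_trunc_cons_0, Rabs_R0. simpl length. rewrite hN_0. rewrite pow_i by lia. lra.
    + rewrite mzv_trunc_cons_S. simpl length.
      eapply Rle_trans; [apply Rabs_triang|]. rewrite Rabs_mult.
      pose proof (term_abs_le a N Ha) as T. pose proof (IH N) as HN.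
      pose proof (hN_ge0 N). pose proof (Rinv_S_pos N).
      assert (Hm : hN N ^ length r <= hN (S N) ^ length r) by (apply pow_incr; split; [lra| apply hN_mono; lia]).
      assert (Hm2 : hN N <= hN (S N)) by (apply hN_mono; lia).
      assert (Hp : 0 <= hN N ^ length r) by (apply pow_le; lra).
      rewrite hN_S in *. rewrite <- tech_pow_Rmult.
      assert (Rabs (sgn_pow a (S N) / INR (S N) ^ Z.abs_nat a) * Rabs (mzv_trunc r N) <= / INR (S N) * (hN N + / INR (S N)) ^ length r).
      { apply Rmult_le_compat; try apply Rabs_pos; lra. }
      assert (hN N * hN N ^ length r <= hN N * (hN N + / INR (S N)) ^ length r) by (apply Rmult_le_compat_l; lra).
      change (hN N ^ length (a :: r)) with (hN N * hN N ^ length r) in IHN. lra.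
Qed.

Lemma coef_bound s : nz s -> forall j, Rabs (coef s j) <= hN j ^ length s.
Proof.
  intros Hs j. destruct s as [|a r].
  - destruct j; simpl; rewrite ?Rabs_R1, ?Rabs_R0; lra.
  - inversion Hs as [|? ? Ha Hr]; subst. destruct j.
    + change (coef (a::r) 0) with 0. rewrite Rabs_R0, hN_0. simpl length. rewrite pow_i by lia. lra.
    + change (coef (a :: r) (S j)) with (sgn_pow a (S j) / INR (S j) ^ Z.abs_nat a * mzv_trunc r j). rewrite Rabs_mult. simpl length.
      pose proof (term_abs_le a j Ha). pose proof (mzv_bound r Hr j).
      pose proof (hN_ge0 j).
      assert (hN j ^ length r <= hN (S j) ^ length r) by (apply pow_incr; split; [lra| apply hN_mono; lia]).
      assert (/ INR (S j) <= hN (S j)) by (rewrite hN_S; lra).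
      rewrite <- tech_pow_Rmult. apply Rmult_le_compat; try apply Rabs_pos; lra.
Qed.

Lemma coef_lin_bound s : nz s -> exists B, forall j, Rabs (coef s j) <= B * INR (S j).
Proof.
  intros Hs. destruct (hpow_bound (length s)) as [B [_ HB]]. exists B. intros j.
  eapply Rle_trans; [apply coef_bound; auto| apply HB].
Qed.

Lemma lin_geom_bound r n : 0 <= r < 1 -> INR (S n) * r ^ n <= / (1 - r).
Proof.
  intros Hr.
  assert (H : forall n, INR (S n) * r ^ n <= sum_f_R0 (fun i => r ^ i) n).
  { clear n. induction n.
    - simpl. lra.
    - rewrite S_INR. simpl sum_f_R0.
      assert (r ^ S n <= r ^ n) by (simpl; rewrite <- (Rmult_1_l (r ^ n)) at 2; apply Rmult_le_compat_r; [apply pow_le|]; lra).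
      assert (INR (S n) * r ^ S n <= INR (S n) * r ^ n) by (apply Rmult_le_compat_l; [left; apply INR_S_pos| lra]).
      change (r ^ S n) with (r * r ^ n) in *. lra. }
  eapply Rle_trans; [apply H|].
  rewrite tech3 by lra.
  unfold Rdiv. rewrite <- (Rmult_1_l (/ (1 - r))) at 2.
  apply Rmult_le_compat_r. left; apply Rinv_0_lt_compat; lra.
  assert (0 <= r ^ S n) by (apply pow_le; lra). lra.
Qed.

Lemma radius_ge1 (a : nat -> R) B : (forall j, Rabs (a j) <= B * INR (S j)) -> Rbar_le 1 (CV_radius a).
Proof.
  intros Ha. pose proof (CV_radius_bounded a) as [Hub Hlub].
  assert (Hin : forall r, 0 <= r < 1 -> exists M, forall n, Rabs (a n * r ^ n) <= M).
  { intros r Hr. exists (Rmax B 0 * / (1 - r)). intros n.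
    rewrite Rabs_mult. rewrite (Rabs_pos_eq (r ^ n)) by (apply pow_le; lra).
    apply Rle_trans with (Rmax B 0 * INR (S n) * r ^ n).
    { apply Rmult_le_compat_r; [apply pow_le; lra|]. eapply Rle_trans; [apply Ha|].
      apply Rmult_le_compat_r; [left; apply INR_S_pos| apply Rmax_l]. }
    rewrite Rmult_assoc. apply Rmult_le_compat_l; [apply Rmax_r|]. apply lin_geom_bound; auto. }
  pose proof (CV_radius_ge_0 a) as H0.
  destruct (CV_radius a) as [l| |] eqn:E; simpl; auto.
  destruct (Rle_dec 1 l) as [h|h]; auto.
  exfalso. simpl in H0.
  assert (Hr : 0 <= (l + 1) / 2 < 1) by lra.
  specialize (Hub _ (Hin _ Hr)). simpl in Hub. lra.
Qed.

Lemma coef_radius s : nz s -> Rbar_le 1 (CV_radius (coef s)).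
Proof.
  intros Hs. destruct (coef_lin_bound s Hs) as [B HB]. eapply radius_ge1; eauto.
Qed.


Lemma dR_plus (f g : R -> R) x a b : is_derive f x a -> is_derive g x b -> is_derive (fun y => f y + g y) x (a + b).
Proof. intros; now apply (is_derive_plus f g). Qed.
Lemma dR_minus (f g : R -> R) x a b : is_derive f x a -> is_derive g x b -> is_derive (fun y => f y - g y) x (a - b).
Proof. intros; now apply (is_derive_minus f g). Qed.
Lemma dR_mult (f g : R -> R) x a b : is_derive f x a -> is_derive g x b -> is_derive (fun y => f y * g y) x (a * g x + f x * b).
Proof. intros. apply (is_derive_mult f g); auto. intros; apply Rmult_comm. Qed.
Lemma dR_scal k f x a : is_derive f x a -> is_derive (fun y => k * f y) x (k * a).
Proof. apply is_derive_scal. Qed.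
Lemma dR_const (c x : R) : is_derive (fun _ => c) x 0.
Proof. apply (is_derive_const c x). Qed.
Lemma dR_comp (f g : R -> R) x a b : is_derive f (g x) a -> is_derive g x b -> is_derive (fun y => f (g y)) x (b * a).
Proof. intros. now apply (is_derive_comp f g). Qed.
Lemma dR_eq (f : R -> R) (x a b : R) : a = b -> is_derive f x a -> is_derive f x b.
Proof. intros ->; auto. Qed.
Lemma dR_ext (f g : R -> R) x a : (forall y, f y = g y) -> is_derive f x a -> is_derive g x a.
Proof. apply is_derive_ext. Qed.

Definition Lw (s : list Z) (x : R) : R := PSeries (coef s) x.

Lemma in_radius s x : nz s -> -1 < x < 1 -> Rbar_lt (Rabs x) (CV_radius (coef s)).
Proof.
  intros Hs Hx. pose proof (coef_radius s Hs) as H.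
  assert (Rabs x < 1) by (apply Rabs_def1; lra).
  destruct (CV_radius (coef s)) as [l| |]; simpl in *; auto; try lra; contradiction.
Qed.

Lemma Lw_nil x : Lw nil x = 1.
Proof.
  unfold Lw. assert (ex_pseries (coef nil) x).
  { apply CV_radius_inside. rewrite (CV_radius_ext _ (fun n => match n with O => 1 | S _ => 0 end)) by (intros [|n]; reflexivity).
    assert (E: CV_radius (fun n : nat => match n with 0%nat => 1 | S _ => 0 end) = p_infty).
    { rewrite <- (CV_radius_decr_1 (fun n : nat => match n with 0%nat => 1 | S _ => 0 end)).
      rewrite (CV_radius_ext _ (fun _ => 0)). apply CV_radius_const_0. intros n. reflexivity. }
    rewrite E. simpl. auto. }
  rewrite PSeries_decr_1 by auto. simpl coef.
  rewrite (PSeries_ext _ (fun _ => 0)) by (intros; reflexivity). rewrite PSeries_const_0. ring.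
Qed.

Lemma Lw_cons_0 a r : Lw (a :: r) 0 = 0.
Proof. unfold Lw. rewrite PSeries_0. reflexivity. Qed.

Lemma Lw_neg r x : Lw ((-1)%Z :: r) x = Lw (1%Z :: r) (- x).
Proof.
  unfold Lw, PSeries. apply Series_ext. intros [|n].
  - simpl. ring.
  - unfold coef. unfold sgn_pow. replace ((-1 <? 0)%Z) with true by reflexivity. replace ((1 <? 0)%Z) with false by reflexivity.
    change (Z.abs_nat (-1)) with 1%nat. change (Z.abs_nat 1) with 1%nat.
    replace (- x) with ((-1) * x) by ring. rewrite Rpow_mult_distr. field.
    apply Rgt_not_eq, INR_S_pos.
Qed.

Lemma Lw_derive_one r x : nz r -> -1 < x < 1 ->
  is_derive (Lw (1%Z :: r)) x (Lw r x / (1 - x)).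
Proof.
  intros Hr Hx.
  assert (Hs : nz (1%Z :: r)) by (constructor; auto; lia).
  pose proof (in_radius _ _ Hs Hx) as Hrad.
  pose proof (is_derive_PSeries _ _ Hrad) as HD. unfold Lw.
  eapply dR_eq; [|exact HD].
  set (c := coef (1%Z :: r)).
  set (T := fun n => mzv_trunc r n).
  assert (EPT : forall n, PS_derive c n = T n).
  { intros n. unfold PS_derive, c, T, coef. unfold sgn_pow. replace ((1 <? 0)%Z) with false by reflexivity.
    change (Z.abs_nat 1) with 1%nat. rewrite pow_1. field. apply Rgt_not_eq, INR_S_pos. }
  rewrite (PSeries_ext _ _ _ EPT).
  assert (RT : Rbar_lt (Rabs x) (CV_radius T)).
  { rewrite <- (CV_radius_ext _ _ EPT). rewrite CV_radius_derive. exact Hrad. }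
  assert (ET : ex_pseries T x) by (apply CV_radius_inside; auto).
  assert (E1 : PSeries T x * (1 - x) = PSeries (coef r) x).
  { replace (PSeries T x * (1 - x)) with (PSeries T x - x * PSeries T x) by ring.
    rewrite <- PSeries_incr_1. rewrite <- PSeries_minus; auto.
    2: apply ex_pseries_incr_1; auto.
    apply PSeries_ext. intros [|n]; unfold PS_minus, PS_incr_1, T; simpl plus; simpl opp.
    - change (mzv_trunc r 0 + - 0 = coef r 0). rewrite <- sum_coef. simpl. ring.
    - change (mzv_trunc r (S n) + - mzv_trunc r n = coef r (S n)). rewrite <- !sum_coef. simpl sum_f_R0. ring. }
  rewrite <- E1. unfold Rdiv. rewrite Rmult_assoc, Rinv_r, Rmult_1_r by lra. reflexivity.
Qed.

Lemma Lw_derive_pos (p : nat) r x : nz r -> -1 < x < 1 -> x <> 0 ->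
  is_derive (Lw (Z.of_nat (S (S p)) :: r)) x (Lw (Z.of_nat (S p) :: r) x / x).
Proof.
  intros Hr Hx Hx0.
  assert (Hs : nz (Z.of_nat (S (S p)) :: r)) by (constructor; auto; lia).
  pose proof (in_radius _ _ Hs Hx) as Hrad.
  pose proof (is_derive_PSeries _ _ Hrad) as HD. unfold Lw.
  eapply dR_eq; [|exact HD].
  apply Rmult_eq_reg_l with x; auto.
  rewrite <- PSeries_incr_1. unfold Rdiv. rewrite Rmult_comm, Rmult_assoc, Rinv_l, Rmult_1_r by auto.
  apply PSeries_ext. intros [|n].
  - simpl. reflexivity.
  - unfold PS_incr_1, PS_derive, coef.
    assert (S1 : forall q, sgn_pow (Z.of_nat q) (S n) = 1) by (intros q; unfold sgn_pow; replace (Z.of_nat q <? 0)%Z with false by (symmetry; apply Z.ltb_ge; lia); reflexivity).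
    rewrite !S1. rewrite !Zabs2Nat.id.
    change (INR (S n) ^ S (S p)) with (INR (S n) * INR (S n) ^ S p).
    field. split; [apply pow_nonzero|]; apply Rgt_not_eq, INR_S_pos.
Qed.


Lemma deriv_cont (f : R -> R) x d : is_derive f x d -> continuity_pt f x.
Proof.
  intros H. apply continuity_pt_filterlim. apply (ex_derive_continuous f x). exists d; exact H.
Qed.

Lemma deriv_unique (f g df : R -> R) a b c :
  (forall x, a < x < b -> is_derive f x (df x)) ->
  (forall x, a < x < b -> is_derive g x (df x)) ->
  a < c < b -> f c = g c -> forall x, a < x < b -> f x = g x.
Proof.
  intros Hf Hg Hc Hfc x Hx.
  set (h := fun y => f y - g y).
  assert (Hh : forall y, a < y < b -> is_derive h y 0).
  { intros y Hy. eapply dR_eq; [|apply dR_minus; [apply Hf|apply Hg]; auto]. ring. }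
  destruct (MVT_gen h c x (fun _ => 0)) as [d [Hd E]].
  - intros y Hy. apply Hh. pose proof (Rmin_l c x); pose proof (Rmin_r c x); pose proof (Rmax_l c x); pose proof (Rmax_r c x).
    destruct (Rle_dec c x); [rewrite Rmin_left, Rmax_right in Hy by lra| rewrite Rmin_right, Rmax_left in Hy by lra]; lra.
  - intros y Hy. apply deriv_cont with 0. apply Hh.
    destruct (Rle_dec c x); [rewrite Rmin_left, Rmax_right in Hy by lra| rewrite Rmin_right, Rmax_left in Hy by lra]; lra.
  - unfold h in E. lra.
Qed.

Lemma nz_ones n : nz (ones n).
Proof. unfold nz, ones. induction n; simpl; constructor; auto; lia. Qed.

Lemma nz_app s t : nz s -> nz t -> nz (s ++ t).
Proof. intros; apply List.Forall_app; auto. Qed.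

Lemma d_mlog y : y < 1 -> is_derive (fun t => - ln (1 - t)) y (/ (1 - y)).
Proof. intros H. auto_derive; [lra| field; lra]. Qed.

Lemma Lw_ones n x : -1 < x < 1 -> Lw (ones n) x = (- ln (1 - x)) ^ n / INR (fact n).
Proof.
  revert x. induction n; intros x Hx.
  - simpl. rewrite Lw_nil. field.
  - change (ones (S n)) with (1%Z :: ones n).
    apply (deriv_unique (Lw (1%Z :: ones n)) (fun y => (- ln (1 - y)) ^ S n / INR (fact (S n))) (fun y => (- ln (1 - y)) ^ n / INR (fact n) / (1 - y)) (-1) 1 0).
    + intros y Hy. eapply dR_eq; [|apply Lw_derive_one; auto using nz_ones]. rewrite IHn by lra. reflexivity.
    + intros y Hy.
      pose proof (d_mlog y ltac:(lra)) as H1.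
      pose proof (is_derive_pow _ (S n) _ _ H1) as H2.
      pose proof (is_derive_scal _ _ (/ INR (fact (S n))) _ H2) as H3.
      eapply dR_ext in H3; [| intros t; apply Rmult_comm].
      eapply dR_eq; [|exact H3].
      change (Init.Nat.pred (S n)) with n. rewrite fact_simpl, mult_INR.
      pose proof (INR_S_pos n). pose proof (lt_0_INR _ (lt_O_fact n)).
      field. repeat split; lra.
    + lra.
    + rewrite Lw_cons_0. rewrite Rminus_0_r, ln_1. rewrite Ropp_0, pow_i by lia. unfold Rdiv. ring.
    + exact Hx.
Qed.


Fixpoint fs (f : nat -> R) (N : nat) : R :=
  match N with O => 0 | S N' => fs f N' + f N' end.

Lemma fs_S f N : fs f (S N) = fs f N + f N.
Proof. reflexivity. Qed.
Lemma fs_0 f : fs f 0 = 0.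
Proof. reflexivity. Qed.

Lemma fs_ext f g N : (forall p, (p < N)%nat -> f p = g p) -> fs f N = fs g N.
Proof. induction N; intros H; simpl; auto. rewrite IHN by (intros; apply H; lia). rewrite H by lia. ring. Qed.

Lemma fs_scal a f N : fs (fun p => a * f p) N = a * fs f N.
Proof. induction N; simpl; [ring|]. rewrite IHN. ring. Qed.

Lemma fs_plus f g N : fs (fun p => f p + g p) N = fs f N + fs g N.
Proof. induction N; simpl; [ring|]. rewrite IHN. ring. Qed.

Lemma fs_shift f N : fs f (S N) = f 0%nat + fs (fun j => f (S j)) N.
Proof. induction N; simpl; [ring|]. simpl in IHN. rewrite IHN. ring. Qed.

Lemma fs_sum f N : fs f (S N) = sum_f_R0 f N.
Proof. induction N; simpl; [ring|]. simpl in IHN. rewrite IHN. reflexivity. Qed.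

Lemma fs_zero f N : (forall p, (p < N)%nat -> f p = 0) -> fs f N = 0.
Proof. intros H. rewrite (fs_ext f (fun _ => 0)) by auto. induction N; simpl; [ring|]. rewrite IHN by auto. ring. Qed.

Lemma d_fs (f df : nat -> R -> R) N y :
  (forall p, (p < N)%nat -> is_derive (f p) y (df p y)) ->
  is_derive (fun t => fs (fun p => f p t) N) y (fs (fun p => df p y) N).
Proof.
  induction N; intros H.
  - simpl. apply dR_const.
  - simpl. apply dR_plus. apply IHN; intros; apply H; lia. apply H; lia.
Qed.

Definition Dl (y : R) := ln (1 - y).
Definition El (j : nat) (y : R) := Dl y ^ j / INR (fact j).
Definition vv (y : R) := (1 - y) / 2.
Definition Lp (j p : nat) := Lw (Z.of_nat (S (S p)) :: ones j) (1/2).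
Definition Bt (n j : nat) (y : R) :=
  Lw (Z.of_nat (S n) :: ones j) (vv y) - fs (fun p => El (n - 1 - p) y * Lp j p) n.
Definition cst (k i : nat) := (- ln 2) ^ (k + 1 - i) / INR (fact (k + 1 - i)).
Definition Phi (k n : nat) (y : R) :=
  (-1) ^ n * (cst k 0 * El n y + fs (fun j => cst k (S j) * Bt n j y) (S k)).
Definition Gw (k n : nat) := ones n ++ (-1)%Z :: ones k.
Definition Gf (k n : nat) (y : R) := Lw (Gw k n) y.

Lemma fact_pos n : 0 < INR (fact n).
Proof. apply lt_0_INR, lt_O_fact. Qed.

Lemma d_Dl y : y < 1 -> is_derive Dl y (- / (1 - y)).
Proof. intros H. unfold Dl. auto_derive; [lra| field; lra]. Qed.

Lemma d_El j y : y < 1 -> is_derive (El (S j)) y (- El j y / (1 - y)).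
Proof.
  intros Hy. unfold El.
  pose proof (is_derive_pow _ (S j) _ _ (d_Dl y Hy)) as H2.
  pose proof (is_derive_scal _ _ (/ INR (fact (S j))) _ H2) as H3.
  eapply dR_ext in H3; [| intros t; apply Rmult_comm].
  eapply dR_eq; [|exact H3].
  change (Init.Nat.pred (S j)) with j. rewrite fact_simpl, mult_INR.
  pose proof (INR_S_pos j). pose proof (fact_pos j).
  field. repeat split; lra.
Qed.

Lemma El_0 y : El 0 y = 1.
Proof. unfold El. simpl. field. Qed.

Lemma El_S_at0 j : El (S j) 0 = 0.
Proof. unfold El, Dl. rewrite Rminus_0_r, ln_1, pow_i by lia. unfold Rdiv; ring. Qed.

Lemma vv_range y : -1 < y < 1 -> -1 < vv y < 1 /\ vv y <> 0.
Proof. intros H. unfold vv. split; [split|]; lra. Qed.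

Lemma d_Lw_vv n j y : -1 < y < 1 ->
  is_derive (fun t => Lw (Z.of_nat (S (S n)) :: ones j) (vv t)) y (- Lw (Z.of_nat (S n) :: ones j) (vv y) / (1 - y)).
Proof.
  intros Hy. destruct (vv_range y Hy) as [Hv Hv0].
  pose proof (Lw_derive_pos n (ones j) (vv y) (nz_ones j) Hv Hv0) as H1.
  assert (H2 : is_derive vv y (- / 2)) by (unfold vv; auto_derive; [auto| field]).
  pose proof (dR_comp _ _ y _ _ H1 H2) as H3.
  eapply dR_eq; [|exact H3]. unfold vv. field. lra.
Qed.

Lemma d_Bt n j y : -1 < y < 1 -> is_derive (Bt (S n) j) y (- Bt n j y / (1 - y)).
Proof.
  intros Hy. unfold Bt.
  assert (E : forall t, fs (fun p => El (S n - 1 - p) t * Lp j p) (S n) =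
                   fs (fun p => El (S (n - 1 - p)) t * Lp j p) n + Lp j n).
  { intros t. rewrite fs_S. f_equal.
    - apply fs_ext. intros p Hp. f_equal. f_equal. lia.
    - replace (S n - 1 - n)%nat with 0%nat by lia. rewrite El_0. ring. }
  apply dR_ext with (fun t => Lw (Z.of_nat (S (S n)) :: ones j) (vv t) - (fs (fun p => El (S (n - 1 - p)) t * Lp j p) n + Lp j n)); [intros t; rewrite E; reflexivity|].
  apply dR_eq with (- Lw (Z.of_nat (S n) :: ones j) (vv y) / (1 - y) -
                    (fs (fun p => - El (n - 1 - p) y / (1 - y) * Lp j p) n + 0)).
  { rewrite Rplus_0_r. 
    rewrite (fs_ext _ (fun p => (- / (1 - y)) * (El (n - 1 - p) y * Lp j p))) by (intros; field; lra).
    rewrite fs_scal. field. lra. }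
  apply dR_minus. apply d_Lw_vv; auto.
  apply dR_plus; [|apply dR_const].
  apply (d_fs (fun p t => El (S (n - 1 - p)) t * Lp j p) (fun p t => - El (n - 1 - p) t / (1 - t) * Lp j p)).
  intros p Hp.
  eapply dR_eq; [|apply dR_mult; [apply d_El; lra| apply dR_const]]. cbv beta. ring.
Qed.

Lemma d_Phi k n y : -1 < y < 1 -> is_derive (Phi k (S n)) y (Phi k n y / (1 - y)).
Proof.
  intros Hy. unfold Phi.
  eapply dR_eq; [|apply dR_scal, dR_plus; [apply dR_scal, d_El; lra|
     apply (d_fs (fun j t => cst k (S j) * Bt (S n) j t) (fun j t => cst k (S j) * (- Bt n j t / (1 - t))));
     intros p Hp; apply dR_scal, d_Bt; auto]].
  rewrite (fs_ext _ (fun j => (- / (1 - y)) * (cst k (S j) * Bt n j y))) by (intros; field; lra).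
  rewrite fs_scal. simpl pow. field. lra.
Qed.

Lemma Phi_S_at0 k n : Phi k (S n) 0 = 0.
Proof.
  unfold Phi. rewrite El_S_at0. rewrite fs_zero. ring.
  intros j Hj. unfold Bt.
  replace (vv 0) with (1/2) by (unfold vv; field).
  rewrite fs_S. rewrite fs_zero.
  - replace (S n - 1 - n)%nat with 0%nat by lia. rewrite El_0. unfold Lp. ring.
  - intros p Hp. replace (S n - 1 - p)%nat with (S (n - 1 - p)) by lia. rewrite El_S_at0. ring.
Qed.


Lemma binom_fs a W K :
  fs (fun i => a ^ (K - i) / INR (fact (K - i)) * (W ^ i / INR (fact i))) (S K) = (W + a) ^ K / INR (fact K).
Proof.
  rewrite fs_sum, binomial. unfold Rdiv at 3. rewrite Rmult_comm, scal_sum.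
  apply sum_eq. intros i Hi. unfold Binomial.C.
  pose proof (fact_pos i). pose proof (fact_pos (K - i)). pose proof (fact_pos K).
  cbv beta. field. repeat split; lra.
Qed.

Lemma nz_Gw k n : nz (Gw k n).
Proof. unfold Gw. apply nz_app. apply nz_ones. constructor; [lia| apply nz_ones]. Qed.

Lemma G0_closed k y : -1 < y < 1 -> Gf k 0 y = (- ln (1 + y)) ^ S k / INR (fact (S k)).
Proof.
  intros Hy. unfold Gf, Gw. simpl app. rewrite Lw_neg.
  change (1%Z :: ones k) with (ones (S k)). rewrite Lw_ones by lra.
  replace (1 - - y) with (1 + y) by ring. reflexivity.
Qed.

Lemma Phi0_closed k y : -1 < y < 1 -> Phi k 0 y = (- ln (1 + y)) ^ S k / INR (fact (S k)).
Proof.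
  intros Hy. unfold Phi. rewrite pow_O, Rmult_1_l, El_0.
  set (W := - ln (1 - vv y)).
  assert (HB : forall j, Bt 0 j y = W ^ S j / INR (fact (S j))).
  { intros j. unfold Bt. rewrite fs_0, Rminus_0_r. change (Z.of_nat 1 :: ones j) with (ones (S j)).
    rewrite Lw_ones. reflexivity. destruct (vv_range y Hy); auto. }
  rewrite (fs_ext _ (fun j => cst k (S j) * (W ^ S j / INR (fact (S j))))) by (intros; rewrite HB; reflexivity).
  replace (cst k 0 * 1) with (cst k 0 * (W ^ 0 / INR (fact 0))) by (simpl; field).
  rewrite <- (fs_shift (fun i => cst k i * (W ^ i / INR (fact i))) (S k)).
  unfold cst. replace (k + 1)%nat with (S k) by lia.
  rewrite binom_fs. f_equal. f_equal.
  unfold W, vv. replace (1 - (1 - y) / 2) with ((1 + y) / 2) by field.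
  rewrite ln_div by lra. ring.
Qed.

Lemma G_eq_Phi k n y : -1 < y < 1 -> Gf k n y = Phi k n y.
Proof.
  revert y. induction n; intros y Hy.
  - rewrite G0_closed, Phi0_closed; auto.
  - apply (deriv_unique (Gf k (S n)) (Phi k (S n)) (fun t => Phi k n t / (1 - t)) (-1) 1 0).
    + intros t Ht. unfold Gf. change (Gw k (S n)) with (1%Z :: Gw k n).
      eapply dR_eq; [|apply Lw_derive_one; [apply nz_Gw| exact Ht]].
      fold (Gf k n t). rewrite IHn by exact Ht. reflexivity.
    + intros t Ht. apply d_Phi; auto.
    + lra.
    + rewrite Phi_S_at0. unfold Gf. change (Gw k (S n)) with (1%Z :: Gw k n). apply Lw_cons_0.
    + exact Hy.
Qed.


Lemma Abel1 (a : nat -> R) : Rbar_le 1 (CV_radius a) -> ex_pseries a 1 ->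
  filterlim (PSeries a) (at_left 1) (locally (PSeries a 1)).
Proof.
  intros Hr He.
  destruct (CV_radius a) as [l| |] eqn:E.
  - simpl in Hr. destruct (Rle_lt_or_eq_dec 1 l Hr) as [Hlt|Heq].
    + apply (filterlim_filter_le_1 (F := locally 1)). apply filter_le_within.
      apply continuity_pt_filterlim. apply PSeries_continuity. rewrite E. simpl. rewrite Rabs_R1. exact Hlt.
    + subst l. pose proof (Abel a) as HA. rewrite E in HA. apply HA; simpl; auto. lra.
  - apply (filterlim_filter_le_1 (F := locally 1)). apply filter_le_within.
    apply continuity_pt_filterlim. apply PSeries_continuity. rewrite E. simpl. auto.
  - simpl in Hr. contradiction.
Qed.

Lemma ex_series_bounded (a : nat -> R) B : (forall n, 0 <= a n) -> (forall N, sum_f_R0 a N <= B) -> ex_series a.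
Proof.
  intros Hp Hb.
  assert (H : ex_finite_lim_seq (sum_n a)).
  { apply ex_finite_lim_seq_incr with B.
    - intros n. rewrite !sum_n_Reals. simpl. specialize (Hp (S n)). lra.
    - intros n. rewrite sum_n_Reals. apply Hb. }
  destruct H as [l Hl]. exists l. exact Hl.
Qed.

Lemma mzv_trunc_ones_nonneg j N : 0 <= mzv_trunc (ones j) N.
Proof.
  revert N. induction j; intros N.
  - simpl. lra.
  - change (ones (S j)) with (1%Z :: ones j). induction N.
    + rewrite mzv_trunc_cons_0. lra.
    + rewrite mzv_trunc_cons_S. unfold sgn_pow. replace ((1 <? 0)%Z) with false by reflexivity.
      change (Z.abs_nat 1) with 1%nat. rewrite pow_1.
      pose proof (IHj N). pose proof (Rinv_S_pos N).
      assert (0 <= 1 / INR (S N) * mzv_trunc (ones j) N) by (unfold Rdiv; rewrite Rmult_1_l; apply Rmult_le_pos; lra).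
      lra.
Qed.

Lemma zeta_conv m j : ex_pseries (coef (Z.of_nat (S (S m)) :: ones j)) 1.
Proof.
  unfold ex_pseries.
  apply ex_series_ext with (coef (Z.of_nat (S (S m)) :: ones j)).
  { intros n. rewrite pow_n_pow, pow1. unfold scal; simpl; unfold mult; simpl. ring. }
  destruct (PK_bound j) as [B HB].
  assert (Hsgn : forall n, sgn_pow (Z.of_nat (S (S m))) n = 1).
  { intros n. unfold sgn_pow. replace (Z.of_nat (S (S m)) <? 0)%Z with false by (symmetry; apply Z.ltb_ge; lia). reflexivity. }
  assert (Hc : forall n, coef (Z.of_nat (S (S m)) :: ones j) (S n) <= 2 * (hN (S n) ^ j / (INR (S n) * INR (S (S n))))).
  { intros n. unfold coef. rewrite Hsgn, Zabs2Nat.id.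
    pose proof (mzv_bound (ones j) (nz_ones j) n) as Hb. rewrite Rabs_pos_eq in Hb by apply mzv_trunc_ones_nonneg.
    replace (length (ones j)) with j in Hb by (unfold ones; rewrite repeat_length; reflexivity).
    assert (hN n ^ j <= hN (S n) ^ j) by (apply pow_incr; split; [apply hN_ge0| apply hN_mono; lia]).
    pose proof (INR_S_pos n) as P1. pose proof (INR_S_pos (S n)) as P2.
    assert (Q : 1 <= INR (S n)) by (rewrite S_INR; pose proof (pos_INR n); lra).
    assert (E2 : INR (S (S n)) = INR (S n) + 1) by apply S_INR.
    assert (I1 : 1 / INR (S n) ^ S (S m) <= 2 / (INR (S n) * INR (S (S n)))).
    { change (INR (S n) ^ S (S m)) with (INR (S n) * (INR (S n) * INR (S n) ^ m)).
      pose proof (pow_R1_Rle (INR (S n)) m Q).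
      rewrite E2. apply Rmult_le_reg_r with (INR (S n) * (INR (S n) * INR (S n) ^ m) * (INR (S n) * (INR (S n) + 1))).
      apply Rmult_lt_0_compat; [apply Rmult_lt_0_compat; [lra| apply Rmult_lt_0_compat; lra]| apply Rmult_lt_0_compat; lra].
      field_simplify; [|lra|]. 2:{ split; [|lra]. apply Rgt_not_eq. lra. }
      nra. }
    pose proof (mzv_trunc_ones_nonneg j n).
    apply Rle_trans with (2 / (INR (S n) * INR (S (S n))) * mzv_trunc (ones j) n).
    apply Rmult_le_compat_r; auto.
    assert (0 <= 2 / (INR (S n) * INR (S (S n)))) by (unfold Rdiv; apply Rmult_le_pos; [lra| left; apply Rinv_0_lt_compat, Rmult_lt_0_compat; lra]).
    apply Rle_trans with (2 / (INR (S n) * INR (S (S n))) * hN (S n) ^ j).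
    apply Rmult_le_compat_l; lra. unfold Rdiv. lra. }
  apply ex_series_bounded with (2 * B).
  - intros [|n]; [simpl; lra|]. unfold coef. rewrite Hsgn. apply Rmult_le_pos; [|apply mzv_trunc_ones_nonneg].
    unfold Rdiv. rewrite Rmult_1_l. left. apply Rinv_0_lt_compat, pow_lt, INR_S_pos.
  - intros N. apply Rle_trans with (2 * PK j N); [| pose proof (HB N); lra].
    induction N.
    + rewrite PK_0. simpl. lra.
    + rewrite tech5, PK_S. specialize (Hc N). lra.
Qed.


Lemma series_partial_le (a : nat -> R) : (forall n, 0 <= a n) -> ex_series a ->
  forall N, sum_f_R0 a N <= Series a.
Proof.
  intros Hp He N. rewrite <- sum_n_Reals.
  apply is_lim_seq_incr_compare. apply Series_correct in He. exact He.
  intros n. rewrite !sum_n_Reals. simpl. specialize (Hp (S n)). lra.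
Qed.

Lemma sum_e_odd (c : nat -> R) N :
  sum_f_R0 (fun n => (-1) ^ n * c n) (S (2 * N)) = sum_f_R0 (fun i => c (2 * i)%nat - c (S (2 * i))) N.
Proof.
  induction N.
  - simpl. ring.
  - replace (S (2 * S N)) with (S (S (S (2 * N)))) by lia.
    rewrite tech5, tech5. rewrite IHN. rewrite tech5.
    replace (2 * S N)%nat with (S (S (2 * N))) by lia.
    assert (E: (-1) ^ S (S (2 * N)) = 1).
    { replace (S (S (2 * N))) with (2 * (S N))%nat by lia. rewrite pow_mult. replace ((-1)^2) with 1 by ring. apply pow1. }
    assert (E2: (-1) ^ S (S (S (2 * N))) = -1).
    { change ((-1) ^ S (S (S (2 * N)))) with ((-1) * (-1) ^ S (S (2 * N))). rewrite E. ring. }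
    rewrite E, E2. ring.
Qed.

Lemma alt_conv (c : nat -> R) : is_lim_seq c 0 -> ex_series (fun n => Rabs (c (S n) - c n)) ->
  ex_series (fun n => (-1) ^ n * c n).
Proof.
  intros Hc Hd.
  set (q := fun i => c (2 * i)%nat - c (S (2 * i))).
  assert (Hq : ex_series q).
  { apply ex_series_Rabs. apply ex_series_bounded with (Series (fun n => Rabs (c (S n) - c n))).
    - intros; apply Rabs_pos.
    - intros N. eapply Rle_trans; [|apply (series_partial_le _ (fun n => Rabs_pos _) Hd (S (2 * N)))].
      induction N.
      + simpl. unfold q. simpl. rewrite <- Rabs_Ropp. replace (- (c 0%nat - c 1%nat)) with (c 1%nat - c 0%nat) by ring.
        pose proof (Rabs_pos (c 2%nat - c 1%nat)). lra.
      + rewrite tech5. replace (S (2 * S N)) with (S (S (S (2 * N)))) by lia.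
        rewrite tech5, tech5.
        unfold q at 2. replace (2 * S N)%nat with (S (S (2 * N))) by lia.
        rewrite <- Rabs_Ropp. replace (- (c (S (S (2 * N))) - c (S (S (S (2 * N)))))) with (c (S (S (S (2 * N)))) - c (S (S (2 * N)))) by ring.
        pose proof (Rabs_pos (c (S (S (S (S (2 * N))))) - c (S (S (S (2 * N)))))). 
        pose proof (Rabs_pos (c (S (S (2 * N))) - c (S (2 * N)))). lra. }
  destruct Hq as [L HL].
  exists L. change (is_lim_seq (sum_n (fun n => (-1) ^ n * c n)) L).
  apply is_lim_seq_spec. intros eps.
  assert (He2 : 0 < eps / 2) by (pose proof (cond_pos eps); lra).
  change (is_lim_seq (sum_n q) L) in HL. apply is_lim_seq_spec in HL.
  apply is_lim_seq_spec in Hc.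
  destruct (HL (mkposreal _ He2)) as [N1 H1]. destruct (Hc (mkposreal _ He2)) as [N2 H2].
  simpl in H1, H2.
  exists (2 * N1 + N2)%nat. intros n Hn.
  rewrite sum_n_Reals.
  destruct (Nat.Even_or_Odd n) as [[N HN]|[N HN]].
  - subst n. destruct N as [|N].
    + specialize (H1 0%nat ltac:(lia)). specialize (H2 1%nat ltac:(lia)).
      rewrite sum_n_Reals in H1. simpl in *. unfold q in H1. simpl in H1.
      rewrite Rminus_0_r in H2.
      replace (1 * c 0%nat - L) with ((c 0%nat - c 1%nat - L) + c 1%nat) by ring.
      eapply Rle_lt_trans; [apply Rabs_triang|]. lra.
    + assert (Ev : sum_f_R0 (fun n => (-1) ^ n * c n) (2 * S N) = sum_f_R0 q (S N) + c (S (2 * S N))).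
      { unfold q. rewrite <- sum_e_odd. rewrite tech5.
        assert (E: (-1) ^ S (2 * S N) = -1).
        { change ((-1) ^ S (2 * S N)) with ((-1) * (-1) ^ (2 * S N)). rewrite pow_mult.
          replace ((-1)^2) with 1 by ring. rewrite pow1. ring. }
        rewrite E. ring. }
      rewrite Ev.
      specialize (H1 (S N) ltac:(lia)). specialize (H2 (S (2 * S N)) ltac:(lia)).
      rewrite sum_n_Reals in H1. rewrite Rminus_0_r in H2. fold q in H1.
      replace (sum_f_R0 q (S N) + c (S (2 * S N)) - L) with ((sum_f_R0 q (S N) - L) + c (S (2 * S N))) by ring.
      eapply Rle_lt_trans; [apply Rabs_triang|]. lra.
  - subst n. replace (2 * N + 1)%nat with (S (2 * N)) by lia. rewrite sum_e_odd.
    specialize (H1 N ltac:(lia)). rewrite sum_n_Reals in H1. fold q. lra.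
Qed.


Lemma coef_one r n : coef (1%Z :: r) (S n) = mzv_trunc r n / INR (S n).
Proof.
  unfold coef, sgn_pow. replace ((1 <? 0)%Z) with false by reflexivity.
  change (Z.abs_nat 1) with 1%nat. rewrite pow_1. field. apply Rgt_not_eq, INR_S_pos.
Qed.

Lemma coef_neg r n : coef ((-1)%Z :: r) n = (-1) ^ n * coef (1%Z :: r) n.
Proof.
  destruct n. simpl. ring.
  unfold coef, sgn_pow. replace ((-1 <? 0)%Z) with true by reflexivity. replace ((1 <? 0)%Z) with false by reflexivity.
  change (Z.abs_nat (-1)) with 1%nat. change (Z.abs_nat 1) with 1%nat. pose proof (INR_S_pos n). field. lra.
Qed.

Lemma diff_bound a' r' n : nz (a' :: r') ->
  Rabs (coef (1%Z :: a' :: r') (S (S n)) - coef (1%Z :: a' :: r') (S n)) <=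
  2 * (hN (S n) ^ length (a' :: r') / (INR (S n) * INR (S (S n)))).
Proof.
  intros Hs. inversion Hs as [|? ? Ha Hr]; subst.
  rewrite !coef_one. rewrite mzv_trunc_cons_S.
  set (T0 := mzv_trunc (a' :: r') n).
  set (t := sgn_pow a' (S n) / INR (S n) ^ Z.abs_nat a' * mzv_trunc r' n).
  set (K := length r').
  pose proof (INR_S_pos n) as Pa. pose proof (INR_S_pos (S n)) as Pb.
  assert (Eb : INR (S (S n)) = INR (S n) + 1) by apply S_INR.
  assert (Ht : Rabs t <= / INR (S n) * hN n ^ K).
  { unfold t. rewrite Rabs_mult. apply Rmult_le_compat; try apply Rabs_pos. apply term_abs_le; auto. apply mzv_bound; auto. }
  assert (HT : Rabs T0 <= hN n ^ S K) by (apply (mzv_bound (a' :: r')); auto).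
  change (length (a' :: r')) with (S K).
  assert (H1 : 1 <= hN (S n)) by (apply hN_ge1; lia).
  assert (Hm : hN n <= hN (S n)) by (apply hN_mono; lia).
  assert (Hk1 : hN n ^ K <= hN (S n) ^ S K).
  { apply Rle_trans with (hN (S n) ^ K). apply pow_incr; split; [apply hN_ge0| auto].
    change (hN (S n) ^ S K) with (hN (S n) * hN (S n) ^ K). 
    assert (0 <= hN (S n) ^ K) by (apply pow_le; lra). nra. }
  assert (Hk2 : hN n ^ S K <= hN (S n) ^ S K) by (apply pow_incr; split; [apply hN_ge0| auto]).
  replace ((T0 + t) / INR (S (S n)) - T0 / INR (S n)) with (t / INR (S (S n)) - T0 / (INR (S n) * INR (S (S n)))).
  2:{ rewrite Eb. field. lra. }
  eapply Rle_trans; [apply Rabs_triang|]. rewrite Rabs_Ropp.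
  unfold Rdiv. rewrite !Rabs_mult. rewrite !Rabs_inv. rewrite (Rabs_pos_eq (INR (S (S n)))) by lra. rewrite (Rabs_pos_eq (INR (S n) * INR (S (S n)))) by (apply Rmult_le_pos; lra).
  assert (A1 : Rabs t * / INR (S (S n)) <= hN (S n) ^ S K * / (INR (S n) * INR (S (S n)))).
  { rewrite Rinv_mult. apply Rle_trans with ((/ INR (S n) * hN n ^ K) * / INR (S (S n))).
    apply Rmult_le_compat_r; [left; apply Rinv_0_lt_compat; lra| exact Ht].
    assert (0 < / INR (S n)) by (apply Rinv_0_lt_compat; lra).
    assert (0 < / INR (S (S n))) by (apply Rinv_0_lt_compat; lra).
    replace (/ INR (S n) * hN n ^ K * / INR (S (S n))) with (hN n ^ K * (/ INR (S n) * / INR (S (S n)))) by ring.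
    apply Rmult_le_compat_r; [|exact Hk1]. left; apply Rmult_lt_0_compat; lra. }
  assert (A2 : Rabs T0 * / (INR (S n) * INR (S (S n))) <= hN (S n) ^ S K * / (INR (S n) * INR (S (S n)))).
  { apply Rmult_le_compat_r; [left; apply Rinv_0_lt_compat, Rmult_lt_0_compat; lra| lra]. }
  lra.
Qed.

Lemma lhs_conv r : nz r -> r <> nil -> ex_series (coef ((-1)%Z :: r)).
Proof.
  intros Hr Hne. destruct r as [|a' r']; [contradiction|].
  apply ex_series_ext with (fun n => (-1) ^ n * coef (1%Z :: a' :: r') n).
  { intros n. symmetry. apply coef_neg. }
  apply alt_conv.
  - apply is_lim_seq_incr_1.
    set (K := length (a' :: r')).
    apply is_lim_seq_le_le with (u := fun n => - (hN n ^ K / INR (S n))) (w := fun n => hN n ^ K / INR (S n)).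
    + intros n. rewrite coef_one. pose proof (mzv_bound _ Hr n) as Hb. fold K in Hb.
      pose proof (INR_S_pos n).
      assert (Rabs (mzv_trunc (a' :: r') n / INR (S n)) <= hN n ^ K / INR (S n)).
      { unfold Rdiv. rewrite Rabs_mult, Rabs_inv, (Rabs_pos_eq (INR (S n))) by lra.
        apply Rmult_le_compat_r; [left; apply Rinv_0_lt_compat; lra| exact Hb]. }
      pose proof (Rle_abs (mzv_trunc (a' :: r') n / INR (S n))).
      pose proof (Rle_abs (- (mzv_trunc (a' :: r') n / INR (S n)))). rewrite Rabs_Ropp in *. lra.
    + pose proof (proj1 (is_lim_seq_opp _ _) (hpow_lim K)) as HH. simpl in HH. replace (-0) with 0 in HH by ring. exact HH.
    + apply hpow_lim.
  - destruct (PK_bound (length (a' :: r'))) as [B HB].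
    apply ex_series_bounded with (2 * B). intros; apply Rabs_pos.
    intros N. apply Rle_trans with (2 * PK (length (a' :: r')) N); [|specialize (HB N); lra].
    induction N.
    + change (sum_f_R0 (fun n => Rabs (coef (1%Z :: a' :: r') (S n) - coef (1%Z :: a' :: r') n)) 0) with (Rabs (coef (1%Z :: a' :: r') 1 - coef (1%Z :: a' :: r') 0)).
      rewrite coef_one. rewrite mzv_trunc_cons_0. change (coef (1%Z :: a' :: r') 0) with 0.
      rewrite PK_0. unfold Rdiv. rewrite Rmult_0_l, Rminus_0_r, Rabs_R0. lra.
    + rewrite tech5, PK_S. pose proof (diff_bound a' r' N Hr). lra.
Qed.


Lemma lim_plus {T} (F : (T -> Prop) -> Prop) {FF : Filter F} (f g : T -> R) a b :
  filterlim f F (locally a) -> filterlim g F (locally b) -> filterlim (fun x => f x + g x) F (locally (a + b)).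
Proof. intros Hf Hg. apply (filterlim_comp_2 f g Rplus Hf Hg). apply (filterlim_plus a b). Qed.

Lemma lim_mult {T} (F : (T -> Prop) -> Prop) {FF : Filter F} (f g : T -> R) a b :
  filterlim f F (locally a) -> filterlim g F (locally b) -> filterlim (fun x => f x * g x) F (locally (a * b)).
Proof. intros Hf Hg. apply (filterlim_comp_2 f g Rmult Hf Hg). apply (filterlim_mult a b). Qed.

Lemma lim_const {T} (F : (T -> Prop) -> Prop) {FF : Filter F} (c : R) :
  filterlim (fun _ : T => c) F (locally c).
Proof. apply filterlim_const. Qed.

Lemma lim_scal {T} (F : (T -> Prop) -> Prop) {FF : Filter F} (f : T -> R) c a :
  filterlim f F (locally a) -> filterlim (fun x => c * f x) F (locally (c * a)).
Proof. intros Hf. apply (lim_mult F (fun _ => c) f c a); try apply lim_const; try exact Hf; exact FF. Qed.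

Lemma lim_minus {T} (F : (T -> Prop) -> Prop) {FF : Filter F} (f g : T -> R) a b :
  filterlim f F (locally a) -> filterlim g F (locally b) -> filterlim (fun x => f x - g x) F (locally (a - b)).
Proof.
  intros Hf Hg. pose proof (@lim_plus T F FF f (fun x => -1 * g x) a (-1 * b) Hf (@lim_scal T F FF g (-1) b Hg)) as H.
  replace (a - b) with (a + -1 * b) by ring.
  eapply filterlim_ext; [|exact H]. intros x. simpl. ring.
Qed.

Lemma lim_fs {T} (F : (T -> Prop) -> Prop) {FF : Filter F} (f : nat -> T -> R) (l : nat -> R) N :
  (forall p, (p < N)%nat -> filterlim (f p) F (locally (l p))) ->
  filterlim (fun x => fs (fun p => f p x) N) F (locally (fs l N)).
Proof.
  induction N; intros H.
  - simpl. apply (@lim_const T F FF).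
  - simpl. apply (@lim_plus T F FF). apply IHN; intros; apply H; lia. apply H; lia.
Qed.

Lemma cont_right (f : R -> R) x : continuity_pt f x -> filterlim f (at_right x) (locally (f x)).
Proof.
  intros H. apply (filterlim_filter_le_1 (F := locally x)). apply filter_le_within.
  apply continuity_pt_filterlim. exact H.
Qed.

Lemma ball_R x e y : ball x e y <-> Rabs (y - x) < e.
Proof. reflexivity. Qed.

Lemma opp_right_left : filterlim Ropp (at_right (-1)) (at_left 1).
Proof.
  intros P [eps HP]. exists eps. intros y Hy Hy1. apply HP.
  - rewrite ball_R in *. replace (- y - 1) with (- (y - -1)) by ring. rewrite Rabs_Ropp. exact Hy.
  - lra.
Qed.

Lemma vv_right_left : filterlim vv (at_right (-1)) (at_left 1).
Proof.
  intros P [eps HP]. exists eps. intros y Hy Hy1. apply HP.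
  - rewrite ball_R in *.
    unfold vv. replace ((1 - y) / 2 - 1) with (- (y - -1) / 2) by field.
    unfold Rdiv. rewrite Rabs_mult, Rabs_Ropp. rewrite (Rabs_pos_eq (/ 2)) by lra. 
    pose proof (Rabs_pos (y - -1)). pose proof (cond_pos eps). lra.
  - unfold vv. lra.
Qed.

Lemma mzv_PSeries s : mzv s = PSeries (coef s) 1.
Proof.
  unfold mzv, PSeries, Series. f_equal. apply Lim_seq_ext. intros N.
  rewrite sum_n_Reals, <- sum_coef. apply sum_eq. intros i _.
  rewrite pow1. ring.
Qed.

Lemma Li_trunc_S a r x N : Li_trunc (a :: r) x (S N) = Li_trunc (a :: r) x N + x ^ (S N) / (INR (S N)) ^ a * mzv_trunc (map Z.of_nat r) N.
Proof. reflexivity. Qed.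

Lemma Li_PSeries a r x : Li (a :: r) x = Lw (Z.of_nat a :: map Z.of_nat r) x.
Proof.
  unfold Li, Lw, PSeries, Series. f_equal. apply Lim_seq_ext. intros N.
  rewrite sum_n_Reals. induction N.
  - simpl. unfold scal; simpl; unfold mult; simpl. ring.
  - rewrite Li_trunc_S, tech5, IHN. f_equal.
    unfold coef.
    unfold sgn_pow. replace ((Z.of_nat a <? 0)%Z) with false by (symmetry; apply Z.ltb_ge; lia).
    rewrite Zabs2Nat.id. field. apply pow_nonzero, Rgt_not_eq, INR_S_pos.
Qed.


Lemma lhs_limit k m : filterlim (Gf k (S m)) (at_right (-1)) (locally (mzv ((-1)%Z :: ones m ++ (-1)%Z :: ones k))).
Proof.
  set (r := Gw k m).
  assert (Hr : nz r) by apply nz_Gw.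
  assert (Hne : r <> nil) by (unfold r, Gw; destruct m; discriminate).
  assert (Hnz : nz ((-1)%Z :: r)) by (constructor; [lia| exact Hr]).
  change ((-1)%Z :: ones m ++ (-1)%Z :: ones k) with ((-1)%Z :: r).
  rewrite mzv_PSeries.
  apply filterlim_ext with (fun y => PSeries (coef ((-1)%Z :: r)) (Ropp y)).
  { intros y. change (Lw ((-1)%Z :: r) (- y) = Lw (1%Z :: r) y). rewrite Lw_neg, Ropp_involutive. reflexivity. }
  apply (filterlim_comp _ _ _ Ropp (PSeries (coef ((-1)%Z :: r))) _ (at_left 1)).
  apply opp_right_left.
  apply Abel1. apply coef_radius; auto.
  unfold ex_pseries. apply ex_series_ext with (coef ((-1)%Z :: r)).
  { intros n. rewrite pow_n_pow, pow1. unfold scal; simpl; unfold mult; simpl. ring. }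
  apply lhs_conv; auto.
Qed.

Definition Zt (m j : nat) := PSeries (coef (Z.of_nat (S (S m)) :: ones j)) 1.

Definition RHSp (k m : nat) :=
  (-1) ^ (S m) * (cst k 0 * El (S m) (-1) +
    fs (fun j => cst k (S j) * (Zt m j - fs (fun p => El (S m - 1 - p) (-1) * Lp j p) (S m))) (S k)).

Lemma El_lim i : filterlim (El i) (at_right (-1)) (locally (El i (-1))).
Proof.
  apply cont_right. destruct i.
  - apply continuity_pt_ext with (fun _ => 1). intros y. rewrite El_0. reflexivity. apply continuity_pt_const. intros a b; reflexivity.
  - apply deriv_cont with (- El i (-1) / (1 - -1)). apply d_El. lra.
Qed.

Lemma Lwvv_lim m j : filterlim (fun y => Lw (Z.of_nat (S (S m)) :: ones j) (vv y)) (at_right (-1)) (locally (Zt m j)).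
Proof.
  apply (filterlim_comp _ _ _ vv (PSeries (coef (Z.of_nat (S (S m)) :: ones j))) _ (at_left 1)).
  apply vv_right_left.
  apply Abel1. apply coef_radius. constructor; [lia| apply nz_ones].
  apply zeta_conv.
Qed.

Lemma rhs_limit k m : filterlim (Phi k (S m)) (at_right (-1)) (locally (RHSp k m)).
Proof.
  assert (FR : Filter (at_right (-1))) by apply (at_right_proper_filter (-1)).
  unfold Phi, RHSp.
  apply (@lim_scal _ _ FR). apply (@lim_plus _ _ FR). apply (@lim_scal _ _ FR). apply El_lim.
  apply (@lim_fs _ _ FR (fun j y => cst k (S j) * Bt (S m) j y)). intros j Hj.
  apply (@lim_scal _ _ FR). unfold Bt. apply (@lim_minus _ _ FR). apply Lwvv_lim.
  apply (@lim_fs _ _ FR (fun p y => El (S m - 1 - p) y * Lp j p)). intros p Hp.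
  apply (@lim_mult _ _ FR). apply El_lim. apply (@lim_const _ _ FR).
Qed.

Lemma main_eq k m : mzv ((-1)%Z :: ones m ++ (-1)%Z :: ones k) = RHSp k m.
Proof.
  apply (@filterlim_locally_unique _ _ _ (at_right (-1)) (Proper_StrongProper _ (at_right_proper_filter (-1))) (Phi k (S m))).
  - apply filterlim_ext_loc with (Gf k (S m)); [|apply lhs_limit].
    assert (H1 : 0 < 1) by lra. exists (mkposreal 1 H1). intros y Hy Hy1.
    rewrite ball_R in Hy. simpl in Hy. apply G_eq_Phi. apply Rabs_def2 in Hy. lra.
  - apply rhs_limit.
Qed.


Lemma El_m1 i : El i (-1) = ln 2 ^ i / INR (fact i).
Proof. unfold El, Dl. replace (1 - -1) with 2 by ring. reflexivity. Qed.

Lemma map_onesN j : map Z.of_nat (onesN j) = ones j.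
Proof. unfold onesN, ones. induction j; simpl; [reflexivity|]. rewrite IHj. reflexivity. Qed.

Lemma Li_Lw l j : Li (l :: onesN j) (1/2) = Lw (Z.of_nat l :: ones j) (1/2).
Proof. rewrite Li_PSeries, map_onesN. reflexivity. Qed.

Lemma Li1_half j : Li (1%nat :: onesN j) (1/2) = ln 2 ^ S j / INR (fact (S j)).
Proof.
  rewrite Li_Lw. change (Z.of_nat 1 :: ones j) with (ones (S j)). rewrite Lw_ones by lra.
  replace (1 - 1/2) with (/ 2) by field. rewrite ln_Rinv by lra. rewrite Ropp_involutive. reflexivity.
Qed.

Lemma inner_sum m j :
  sum_f_R0 (fun l => ln 2 ^ (m + 1 - l) / INR (fact (m + 1 - l)) * Li (S l :: onesN j) (1 / 2)) (m + 1) =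
  ln 2 ^ S m / INR (fact (S m)) * (ln 2 ^ S j / INR (fact (S j))) + fs (fun p => El (S m - 1 - p) (-1) * Lp j p) (S m).
Proof.
  rewrite <- fs_sum. rewrite fs_shift. replace (m + 1)%nat with (S m) by lia.
  f_equal.
  - rewrite Li1_half. replace (S m - 0)%nat with (S m) by lia. reflexivity.
  - apply fs_ext. intros p Hp. rewrite El_m1. unfold Lp. rewrite Li_Lw.
    replace (S m - S p)%nat with (S m - 1 - p)%nat by lia. reflexivity.
Qed.

Lemma binom_zero k : fs (fun i => cst k i * (ln 2 ^ i / INR (fact i))) (S (S k)) = 0.
Proof.
  unfold cst. replace (k + 1)%nat with (S k) by lia.
  rewrite binom_fs. replace (ln 2 + - ln 2) with 0 by ring. rewrite pow_i by lia. unfold Rdiv. ring.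
Qed.

Lemma per_j k m j Y : (j <= k)%nat ->
  (-1) ^ (m + k + 1) / INR (fact k) * ((-1) ^ j * ln 2 ^ (k - j) * INR (fact j) * Binomial.C k j * Y) =
  (-1) ^ S m * (cst k (S j) * Y).
Proof.
  intros Hj. destruct (Nat.le_exists_sub j k Hj) as [d [Hd _]]. subst k.
  unfold cst, Binomial.C.
  replace (d + j + 1 - S j)%nat with d by lia. replace (d + j - j)%nat with d by lia.
  replace (m + (d + j) + 1)%nat with (S m + j + d)%nat by lia.
  rewrite !pow_add. replace (- ln 2) with (-1 * ln 2) by ring. rewrite Rpow_mult_distr.
  assert (Hjj : (-1) ^ j * (-1) ^ j = 1) by (rewrite <- Rpow_mult_distr; replace (-1 * -1) with 1 by ring; apply pow1).
  pose proof (fact_pos j). pose proof (fact_pos d). pose proof (fact_pos (d + j)).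
  replace ((-1) ^ S m * (-1) ^ j * (-1) ^ d / INR (fact (d + j)) *
    ((-1) ^ j * ln 2 ^ d * INR (fact j) * (INR (fact (d + j)) / (INR (fact j) * INR (fact d))) * Y))
   with ((-1) ^ S m * ((-1) ^ j * (-1) ^ j) * (-1) ^ d * ln 2 ^ d / INR (fact d) * Y) by (field; repeat split; lra).
  rewrite Hjj. field. lra.
Qed.

Theorem theorem3p3 (m k : nat) :
  mzv ((-1)%Z :: ones m ++ (-1)%Z :: ones k) =
  (-1) ^ (m + k + 1) / INR (fact k) *
  sum_f_R0 (fun j =>
    (-1) ^ j * (ln 2) ^ (k - j) * INR (fact j) * Binomial.C k j *
    ( mzv (Z.of_nat (m + 2) :: ones j)
      - sum_f_R0 (fun l =>
          (ln 2) ^ (m + 1 - l) / INR (fact (m + 1 - l)) *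
          Li (S l :: onesN j) (1 / 2)) (m + 1) )) k.
Proof.
  rewrite main_eq. unfold RHSp.
  match goal with |- _ = ?c * sum_f_R0 ?g ?n => rewrite <- (fs_sum g n), <- (fs_scal c g) end.
  set (A := fun j => ln 2 ^ S m / INR (fact (S m)) * (ln 2 ^ S j / INR (fact (S j)))).
  set (X := fun j => fs (fun p => El (S m - 1 - p) (-1) * Lp j p) (S m)).
  match goal with |- _ = fs ?g _ => rewrite (fs_ext g (fun j => (-1) ^ S m * (cst k (S j) * (Zt m j - X j)) + (- (-1) ^ S m) * (cst k (S j) * A j))) end.
  2:{ intros j Hj. rewrite inner_sum. replace (m + 2)%nat with (S (S m)) by lia. rewrite mzv_PSeries.
      rewrite per_j by lia. fold (Zt m j). fold (X j). unfold A. ring. }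
  rewrite fs_plus, !fs_scal.
  pose proof (binom_zero k) as HB. rewrite fs_shift in HB.
  assert (HA : fs (fun j => cst k (S j) * A j) (S k) = ln 2 ^ S m / INR (fact (S m)) * fs (fun j => cst k (S j) * (ln 2 ^ S j / INR (fact (S j)))) (S k)).
  { rewrite <- fs_scal. apply fs_ext. intros; unfold A; ring. }
  rewrite HA. rewrite El_m1.
  assert (E0 : cst k 0 * (ln 2 ^ 0 / INR (fact 0)) = cst k 0) by (simpl; field).
  rewrite E0 in HB.
  replace (fs (fun j => cst k (S j) * (ln 2 ^ S j / INR (fact (S j)))) (S k)) with (- cst k 0) by lra.
  unfold X. ring.
Qed.
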